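(* Let $T=(V,E)$ be a tree with $\mathrm{pthin}(T)=2$, and let $\sigma$ be an ordering of $V$ and $S=\{V^0,V^1\}$ a partition of $V$ that are strongly consistent. Let $v_0\in V^0$ and $v_1\in V^1$ be adjacent. If $u$ is a vertex adjacent to neither $v_0$ nor $v_1$ (and distinct from them) with $u<v_0$, then $u<v_1$ as well (i.e., $u$ is strictly before the edge $v_0v_1$). Symmetrically, if such $u$ satisfies $v_0<u$, then $v_1<u$ (i.e., $u$ is strictly after $v_0v_1$).
   Context: For a graph $G=(V,E)$, a linear ordering $<$ of $V$ and a partition of $V$ into classes are called strongly consistent if for every triple $r<s<t$ of vertices with $rt\in E$: if $r$ and $s$ belong to the same class then $st\in E$, and if $s$ and $t$ belong to the same class then $rs\in E$. The proper thinness $\mathrm{pthin}(G)$ is the minimum $k$ such that some ordering and some partition into $k$ classes are strongly consistent. A vertex $u\notin\{v_0,v_1\}$ is strictly before the edge $v_0v_1$ if $u<v_0$ and $u<v_1$, and strictly after if $v_0<u$ and $v_1<u$. *)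

(* Defs.v *)
From mathcomp Require Import all_boot.
Set Implicit Arguments. Unset Strict Implicit. Unset Printing Implicit Defensive.

Definition simple_graph (T : finType) (e : rel T) : Prop :=
  symmetric e /\ irreflexive e.

Definition is_tree (T : finType) (e : rel T) : Prop :=
  [/\ simple_graph e,
      (forall x y : T, connect e x y) &
      ~ (exists s : seq T, [/\ uniq s, 3 <= size s & cycle e s])].

(* A linear ordering of V is represented by an injective position map
   pos : T -> nat, with  x < y  iff  pos x < pos y. *)
Definition lin_order (T : finType) (pos : T -> nat) : Prop := injective pos.

(* Strong consistency of an ordering pos and a partition given by the
   class map c : T -> K (vertices x, y are in the same class iff c x = c y). *)
Definition strongly_consistent (T : finType) (e : rel T) (K : eqType)
  (pos : T -> nat) (c : T -> K) : Prop :=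
  forall r s t : T, pos r < pos s -> pos s < pos t -> e r t ->
    (c r = c s -> e s t) /\ (c s = c t -> e r s).

Definition pthin_le (T : finType) (e : rel T) (k : nat) : Prop :=
  exists (pos : T -> nat) (c : T -> 'I_k),
    lin_order pos /\ strongly_consistent e pos c.

Definition pthin_eq (T : finType) (e : rel T) (k : nat) : Prop :=
  pthin_le e k /\ ~ pthin_le e k.-1.

(* Main.v *)
Require Import Defs.
From mathcomp Require Import all_boot.

Theorem propositionA3 (T : finType) (e : rel T) (pos : T -> nat)
  (c : T -> bool) (v0 v1 : T) :
  is_tree e -> pthin_eq e 2 ->
  lin_order pos -> strongly_consistent e pos c ->
  c v0 = false -> c v1 = true -> e v0 v1 ->
  forall u : T, u != v0 -> u != v1 -> ~~ e u v0 -> ~~ e u v1 ->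
    (pos u < pos v0 -> pos u < pos v1) /\
    (pos v0 < pos u -> pos v1 < pos u).
Proof.
move=> [[sym _] _ _] _ inj sc c0 c1 e01 u nu0 nu1 ne0 ne1.
have neq : pos u != pos v1.
  by apply/negP => /eqP /inj /eqP; rewrite (negbTE nu1).
split=> H.
- rewrite ltn_neqAle neq /=; case: leqP => // lt; exfalso.
  have lt' : pos v1 < pos u by rewrite ltn_neqAle eq_sym neq ltnW.
  have e10 : e v1 v0 by rewrite sym.
  have [h1 h2] := sc v1 u v0 lt' H e10.
  case cu: (c u).
  + by move: ne0; rewrite h1 // c1 cu.
  + by move: ne1; rewrite sym h2 // c0 cu.
- rewrite ltn_neqAle eq_sym neq /=; case: leqP => // lt; exfalso.
  have lt' : pos u < pos v1 by rewrite ltn_neqAle neq ltnW.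
  have [h1 h2] := sc v0 u v1 H lt' e01.
  case cu: (c u).
  + by move: ne0; rewrite sym h2 // c1 cu.
  + by move: ne1; rewrite h1 // c0 cu.
Qed.
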